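(* The asymptotic existential $L_{\mathrm{rings}}$-theory of $\{\mathbb{F}_p[t]/(t^n):n\in\mathbb{N}\}$ equals the existential $L_{\mathrm{rings}}$-theory of the ring $\mathbb{F}_p[t^{1/\infty}]/(t)$.
   Context: $\mathbb{F}_p[t^{1/\infty}]=\varinjlim_n\mathbb{F}_p[t^{1/n}]$ is the direct limit of the polynomial rings $\mathbb{F}_p[t^{1/n}]$, ordered by divisibility of $n$, along the natural inclusions $\mathbb{F}_p[t^{1/n}]\hookrightarrow\mathbb{F}_p[t^{1/m}]$ for $n\mid m$. The ring $\mathbb{F}_p[t^{1/\infty}]/(t)$ is its quotient by the ideal generated by $t$. The asymptotic existential theory of a class is the set of existential sentences true in all but finitely many members. *)

(* Defs.v *)
From HB Require Import structures.
From mathcomp Require Import all_boot all_order all_algebra.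
From mathcomp Require Import finmap.
From mathcomp.multinomials Require Import monalg.

Set Implicit Arguments.
Unset Strict Implicit.
Unset Printing Implicit Defensive.

Import Order.TTheory GRing.Theory Num.Theory.
Local Open Scope ring_scope.

Inductive rterm : Type :=
  | RVar of nat
  | RZero
  | ROne
  | RAdd of rterm & rterm
  | ROpp of rterm
  | RMul of rterm & rterm.

Inductive qfform : Type :=
  | FEq  of rterm & rterm
  | FNot of qfform
  | FAnd of qfform & qfform
  | FOr  of qfform & qfform.

Fixpoint eval_rterm (R : pzRingType) (e : nat -> R) (t : rterm) : R :=
  match t with
  | RVar i => e i
  | RZero => 0
  | ROne => 1
  | RAdd t1 t2 => eval_rterm e t1 + eval_rterm e t2
  | ROpp t1 => - eval_rterm e t1
  | RMul t1 t2 => eval_rterm e t1 * eval_rterm e t2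
  end.

Fixpoint qf_holds (R : pzRingType) (e : nat -> R) (f : qfform) : Prop :=
  match f with
  | FEq t1 t2 => eval_rterm e t1 = eval_rterm e t2
  | FNot f1 => ~ qf_holds e f1
  | FAnd f1 f2 => qf_holds e f1 /\ qf_holds e f2
  | FOr f1 f2 => qf_holds e f1 \/ qf_holds e f2
  end.

(* An existential L_rings-sentence  exists x_0 ... x_k, phi(x_0,...,x_k)    *)
(* (phi quantifier-free, k at least every variable index occurring in phi)  *)
(* is represented by its quantifier-free matrix phi; it holds in the ring R *)
(* iff some assignment of the variables satisfies phi.                      *)
Definition exsentence := qfform.

Definition ex_holds (R : pzRingType) (phi : exsentence) : Prop :=
  exists e : nat -> R, qf_holds e phi.

Definition ex_theory (R : pzRingType) : exsentence -> Prop :=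
  fun phi => ex_holds R phi.

Definition asymptotic_ex_theory (A : nat -> pzRingType) : exsentence -> Prop :=
  fun phi => exists N : nat, forall n : nat, (N <= n)%N -> ex_holds (A n) phi.

(* {poly %/ q} is MathComp's quotient ring R[X]/(q) (for q monic of size    *)
(* > 1, i.e. here n >= 1).                                                  *)
Definition Fpt_mod_tn (p n : nat) : pzRingType :=
  {poly %/ ('X^n : {poly 'F_p})}.

(* The ring F_p[t^{1/oo}] = colim_n F_p[t^{1/n}], realized as the monoid    *)
(* algebra F_p[Q_{>=0}] (the element t^q, q in Q_{>=0}, being the monomial  *)
(* of exponent q), and its quotient by the ideal (t).                       *)

Definition qnn := {q : rat | 0 <= q}.
HB.instance Definition _ := [Choice of qnn by <:].

Definition qnn0 : qnn := exist _ 0 (lexx 0).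

Lemma qnn_add_proof (a b : qnn) : 0 <= sval a + sval b.
Proof. by apply: addr_ge0; [exact: (svalP a) | exact: (svalP b)]. Qed.

Definition qnn_add (a b : qnn) : qnn := exist _ (sval a + sval b) (qnn_add_proof a b).

Lemma qnn_eqP (a b : qnn) : sval a = sval b -> a = b.
Proof. by move=> h; apply: val_inj. Qed.

Lemma qnn_addA : associative qnn_add.
Proof. by move=> a b c; apply: qnn_eqP; rewrite /= addrA. Qed.
Lemma qnn_add0 : left_id qnn0 qnn_add.
Proof. by move=> a; apply: qnn_eqP; rewrite /= add0r. Qed.
Lemma qnn_addr0 : right_id qnn0 qnn_add.
Proof. by move=> a; apply: qnn_eqP; rewrite /= addr0. Qed.
Lemma qnn_addC : commutative qnn_add.
Proof. by move=> a b; apply: qnn_eqP; rewrite /= addrC. Qed.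
Lemma qnn_unit (a b : qnn) : qnn_add a b = qnn0 -> a = qnn0 /\ b = qnn0.
Proof.
move=> /(congr1 sval) /= /eqP; rewrite paddr_eq0; [|exact: (svalP a)|exact: (svalP b)].
by case/andP=> /eqP ha /eqP hb; split; apply: qnn_eqP.
Qed.

HB.instance Definition _ :=
  Choice_isMonomialDef.Build qnn qnn_addA qnn_add0 qnn_addr0 qnn_unit.
HB.instance Definition _ := MonomialDef_isConomialDef.Build qnn qnn_addC.

Definition Fpt_root_inf (p : nat) := {malg 'F_p[qnn]}.

(* The ideal (t) of F_p[t^{1/oo}]: exactly the elements all of whose        *)
(* monomials t^q have q >= 1 (see also lemma mem_t_ideal below).            *)
Definition t_ideal (p : nat) : {pred Fpt_root_inf p} :=
  fun f => all (fun q : qnn => 1 <= sval q) (msupp f).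
Arguments t_ideal p : clear implicits.

Lemma t_ideal_closed (p : nat) : idealr_closed (t_ideal p).
Proof.
split.
- by rewrite /t_ideal unfold_in /= msupp0.
- rewrite /t_ideal unfold_in /=.
  have -> : msupp (1 : Fpt_root_inf p) = [fset qnn0]%fset.
    by rewrite -mpolyC1E msuppC oner_eq0.
  by apply/allP => /(_ qnn0 (fset11 _)); rewrite /= ler10.
- move=> a u v; rewrite /t_ideal !unfold_in /= => /allP hu /allP hv.
  apply/allP => k /(fsubsetP (msuppD_le _ _)); rewrite in_fsetU => /orP [].
    move=> /msuppM_le [k1 [k2 [_ k2u ->]]] /=.
    apply: (le_trans (hu _ k2u)); rewrite lerDr; exact: (svalP k1).
  exact: hv.
Qed.

HB.instance Definition _ (p : nat) :=
  isIdealr.Build (Fpt_root_inf p) (t_ideal p) (t_ideal_closed p).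

Definition Fpt_root_inf_mod_t (p : nat) : pzRingType :=
  {ideal_quot (t_ideal p)}.

(* Sanity check: t_ideal p is exactly the principal ideal (t) = t * F_p[t^{1/oo}]. *)
Definition qnn1 : qnn := exist _ 1 ler01.

Definition tgen (p : nat) : Fpt_root_inf p := << (1 : 'F_p) *g qnn1 >>.

Definition qshift (k : qnn) : qnn := insubd qnn0 (sval k - 1).

Lemma qshiftK (k : qnn) : 1 <= sval k -> qnn_add qnn1 (qshift k) = k.
Proof.
move=> hk; apply: qnn_eqP; rewrite /= /qshift val_insubd subr_ge0 hk.
by rewrite addrC subrK.
Qed.

Lemma mem_t_ideal (p : nat) (f : Fpt_root_inf p) :
  f \in t_ideal p <-> exists g : Fpt_root_inf p, f = tgen p * g.
Proof.
split.
  rewrite /t_ideal unfold_in /= => /allP h.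
  exists (\sum_(k <- msupp f) << f@_k *g qshift k >>).
  rewrite big_distrr /= {1}(monalgE f); apply: eq_big_seq => k kf.
  rewrite malgM_def fgmulUU mul1r; congr (<< _ *g _ >>).
  by symmetry; exact: (qshiftK (h k kf)).
move=> [g ->]; rewrite /t_ideal unfold_in /=; apply/allP => k.
move=> /msuppM_le [k1 [k2 [k1t _ ->]]].
move: k1t; rewrite /tgen msuppU oner_eq0 in_fset1 => /eqP -> /=.
by rewrite lerDl; exact: (svalP k2).
Qed.

(* Main.v *)
From HB Require Import structures.
From mathcomp Require Import all_boot all_order all_algebra.
From mathcomp Require Import finmap.
From mathcomp.multinomials Require Import monalg.
Require Import Defs.
Set Implicit Arguments.
Unset Strict Implicit.
Unset Printing Implicit Defensive.
Import Order.TTheory GRing.Theory Num.Theory.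
Local Open Scope ring_scope.

Fixpoint tbound (t : rterm) : nat :=
  match t with
  | RVar i => i.+1
  | RZero | ROne => 0%N
  | RAdd a b | RMul a b => maxn (tbound a) (tbound b)
  | ROpp a => tbound a
  end.

Fixpoint fbound (f : qfform) : nat :=
  match f with
  | FEq a b => maxn (tbound a) (tbound b)
  | FNot g => fbound g
  | FAnd g h | FOr g h => maxn (fbound g) (fbound h)
  end.

Lemma eval_ext (R : pzRingType) (e e' : nat -> R) t :
  (forall i, (i < tbound t)%N -> e i = e' i) -> eval_rterm e t = eval_rterm e' t.
Proof.
elim: t => [i|||a iha b ihb|a iha|a iha b ihb] /= h //.
- by apply: h.
- by rewrite iha ?ihb // => i hi; apply: h; rewrite leq_max hi ?orbT.
- by rewrite iha.
- by rewrite iha ?ihb // => i hi; apply: h; rewrite leq_max hi ?orbT.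
Qed.

Lemma qf_ext (R : pzRingType) (e e' : nat -> R) f :
  (forall i, (i < fbound f)%N -> e i = e' i) -> qf_holds e f <-> qf_holds e' f.
Proof.
elim: f => [a b|g ih|g ihg h ihh|g ihg h ihh] /= H.
- by rewrite (@eval_ext _ e e' a) ?(@eval_ext _ e e' b) // => i hi; apply: H;
    rewrite leq_max hi ?orbT.
- by rewrite ih.
- rewrite ihg ?ihh // => i hi; apply: H; by rewrite leq_max hi ?orbT.
- rewrite ihg ?ihh // => i hi; apply: H; by rewrite leq_max hi ?orbT.
Qed.

Section Transfer.
Variables (A B C : pzRingType) (f : A -> B) (g : A -> C).
Hypotheses (f0 : f 0 = 0) (f1 : f 1 = 1) (fD : {morph f : x y / x + y})
  (fN : {morph f : x / - x}) (fM : {morph f : x y / x * y}).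
Hypotheses (g0 : g 0 = 0) (g1 : g 1 = 1) (gD : {morph g : x y / x + y})
  (gN : {morph g : x / - x}) (gM : {morph g : x y / x * y}).
Hypothesis fg : forall x, f x = 0 <-> g x = 0.

Lemma eval_f (E : nat -> A) t : eval_rterm (fun i => f (E i)) t = f (eval_rterm E t).
Proof. by elim: t => //= [a -> b ->|a ->|a -> b ->]. Qed.
Lemma eval_g (E : nat -> A) t : eval_rterm (fun i => g (E i)) t = g (eval_rterm E t).
Proof. by elim: t => //= [a -> b ->|a ->|a -> b ->]. Qed.

Lemma qf_transfer (E : nat -> A) phi :
  qf_holds (fun i => f (E i)) phi <-> qf_holds (fun i => g (E i)) phi.
Proof.
elim: phi => [a b|h ih|h ihh k ihk|h ihh k ihk] /=.
- rewrite !eval_f !eval_g.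
  have eqf x y : f x = f y <-> f (x - y) = 0.
    by rewrite fD fN; split => [->|/eqP]; [rewrite subrr|rewrite subr_eq0 => /eqP].
  have eqg x y : g x = g y <-> g (x - y) = 0.
    by rewrite gD gN; split => [->|/eqP]; [rewrite subrr|rewrite subr_eq0 => /eqP].
  by rewrite eqf eqg fg.
- by rewrite ih.
- by rewrite ihh ihk.
- by rewrite ihh ihk.
Qed.
End Transfer.
Lemma qd_proof (D i : nat) : 0 <= (i%:R / D%:R : rat).
Proof. by apply: divr_ge0; apply: ler0n. Qed.
Definition qd (D i : nat) : qnn := exist (fun q : rat => 0 <= q) (i%:R / D%:R) (qd_proof D i).

Section Emb.
Variable p : nat.
Local Notation F := 'F_p.
Local Notation A := (Fpt_root_inf p).

Definition uD (D : nat) : A := << qd D 1 >>.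
Definition emb (D : nat) (P : {poly F}) : A := horner_alg (uD D) P.

Check (emb 1 : {rmorphism _ -> _}).
Lemma qd_add D i j : qnn_add (qd D i) (qd D j) = qd D (i + j).
Proof. by apply: qnn_eqP; rewrite /= natrD mulrDl. Qed.

Lemma uDX D j : uD D ^+ j = << qd D j >>.
Proof.
elim: j => [|j ih].
  rewrite expr0; congr (<< _ *g _ >>). apply: qnn_eqP. by rewrite /= mul0r.
rewrite exprS ih malgM_def fgmulUU mul1r; congr (<< _ *g _>>); apply: qnn_eqP => /=.
by rewrite -mulrDl -natrD add1n.
Qed.

Lemma embXn D j : emb D 'X^j = << qd D j >>.
Proof. by rewrite /emb rmorphXn /= horner_algX uDX. Qed.

Lemma scaleU (c : F) (k : qnn) : c *: (<< k >> : A) = << c *g k >>.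
Proof. by apply/malgP => k'; rewrite mcoeffZ !mcoeffU mulr_natr. Qed.

Lemma embCXn D (c : F) j : emb D (c *: 'X^j) = << c *g qd D j >>.
Proof. by rewrite /emb linearZ /= mulr_algl -/(emb D _) embXn scaleU. Qed.
End Emb.

Section Emb2.
Variable p : nat.
Local Notation F := 'F_p.
Local Notation A := (Fpt_root_inf p).
Local Open Scope quotient_scope.

Definition piR (x : A) : Fpt_root_inf_mod_t p := \pi_({ideal_quot (t_ideal p)}) x.

Lemma piR_rmorph : [/\ piR 0 = 0, piR 1 = 1, {morph piR : x y / x + y},
  {morph piR : x / - x} & {morph piR : x y / x * y}].
Proof. split; rewrite /piR. - exact: rmorph0. - exact: rmorph1. - exact: rmorphD. - exact: rmorphN. - exact: rmorphM. Qed.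

Lemma piR0 (x : A) : piR x = 0 <-> x \in t_ideal p.
Proof.
rewrite /piR; have := Quotient.idealrBE (t_ideal p) x 0.
rewrite subr0 rmorph0 => ->; split => [->|/eqP //]; exact: eqxx.
Qed.

Lemma emb_sum D P : @emb p D P = \sum_(i < size P) << P`_i *g qd D i >>.
Proof.
rewrite -{1}[P]coefK poly_def /emb rmorph_sum /=.
by apply: eq_bigr => i _; rewrite -/(@emb p D _) embCXn.
Qed.

Lemma emb_coef D P k : (@emb p D P)@_k = \sum_(i < size P) P`_i *+ (qd D i == k).
Proof.
rewrite emb_sum raddf_sum /=; apply: eq_bigr => i _; by rewrite mcoeffU.
Qed.

Lemma qd_inj D i j : (0 < D)%N -> qd D i = qd D j -> i = j.
Proof.
move=> D0 /(congr1 sval) /= h.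
have: i%:R / D%:R * D%:R = j%:R / D%:R * D%:R :> rat by rewrite h.
rewrite !divfK ?pnatr_eq0 -?lt0n //; move/eqP; rewrite eqr_nat => /eqP //.
Qed.
End Emb2.

Section Emb3.
Variable p : nat.
Local Notation F := 'F_p.
Local Notation A := (Fpt_root_inf p).

Lemma embK D P : (0 < D)%N ->
  piR (@emb p D P) = 0 <-> (forall i, (i < D)%N -> P`_i = 0).
Proof.
move=> D0; rewrite piR0 /t_ideal unfold_in /=; split.
- move=> /allP h i iD; apply/eqP/negPn/negP => nz.
  have iP : (i < size P)%N.
    by case: leqP => // hs; move: nz; rewrite nth_default.
  have : qd D i \in msupp (@emb p D P).
    rewrite -mcoeff_neq0 emb_coef (bigD1 (Ordinal iP)) //= eqxx big1 ?addr0 ?mulr1n //.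
    move=> j /eqP hj; case: eqP => // /(qd_inj D0) hji.
    by case: hj; apply: val_inj.
  move/h; rewrite /= ler_pdivlMr ?ltr0n // mul1r ler_nat.
  by rewrite leqNgt iD.
- move=> h; apply/allP => k; rewrite -mcoeff_neq0 emb_coef => nz.
  case: (pickP (fun j : 'I_(size P) => P`_j *+ (qd D j == k) != 0)) => [j hj|none]; last first.
    have z : \sum_(j < size P) P`_j *+ (qd D j == k) = 0.
      by apply: big1 => j _; apply/eqP; move/negbFE: (none j).
    by rewrite z eqxx in nz.
  move: hj; case: (qd D j =P k) => // <- hj.
  rewrite /= ler_pdivlMr ?ltr0n // mul1r ler_nat.
  by case: leqP => // jD; move: hj; rewrite h // mulr1n eqxx.
Qed.

Definition psi (n a : nat) (P : {poly F}) : Fpt_mod_tn p n :=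
  in_qpoly ('X^n) (P \Po 'X^a).

Lemma psi_rmorph n a : [/\ psi n a 0 = 0, psi n a 1 = 1, {morph psi n a : x y / x + y},
  {morph psi n a : x / - x} & {morph psi n a : x y / x * y}].
Proof.
split; rewrite /psi.
- by rewrite comp_poly0 rmorph0.
- by rewrite -polyC1 comp_polyC polyC1 rmorph1.
- by move=> x y; rewrite comp_polyD rmorphD.
- by move=> x; rewrite -sub0r comp_polyB comp_poly0 sub0r rmorphN.
- by move=> x y; rewrite comp_polyM rmorphM.
Qed.

Lemma psiK n a D P : (0 < n)%N -> (0 < a)%N -> (a * D.-1 < n)%N -> (n <= a * D)%N ->
  psi n a P = 0 <-> (forall i, (i < D)%N -> P`_i = 0).
Proof.
move=> n0 a0 h1 h2.
have -> : psi n a P = 0 <-> (forall i, (i < n)%N -> (P \Po 'X^a)`_i = 0).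
  rewrite /psi; split.
  - move=> /(congr1 val) /=; rewrite mk_monic_Xn prednK // -Pdiv.RingMonic.take_poly_rmodp => h0 i lin.
    by move/polyP: h0 => /(_ i); rewrite coef_take_poly lin coef0.
  - move=> h; apply: val_inj => /=; rewrite mk_monic_Xn prednK // -Pdiv.RingMonic.take_poly_rmodp.
    apply/polyP => i; rewrite coef_take_poly coef0; case: ifP => // /h //.
split.
- move=> h i iD; have := h (a * i)%N; rewrite coef_comp_poly_Xn // dvdn_mulr // mulKn //.
  apply; apply: leq_ltn_trans h1; rewrite leq_mul2l -ltnS prednK ?iD ?orbT //.
  exact: (leq_ltn_trans (leq0n i) iD).
- move=> h i lin; rewrite coef_comp_poly_Xn //; case: ifP => // /dvdnP [j Hi].
  rewrite Hi in lin *; rewrite mulnK // h //; case: leqP => // Dj.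
  have : (a * D <= j * a)%N by rewrite [(j * a)%N]mulnC leq_mul2l Dj orbT.
  by move=> /(leq_trans h2) hle; move: (leq_ltn_trans hle lin); rewrite ltnn.
Qed.
End Emb3.

From mathcomp Require Import zify.

Lemma arith_ok D n : (0 < D)%N -> (D * D <= n)%N ->
  ((n %/ D + 1) * D.-1 < n)%N /\ (n <= (n %/ D + 1) * D)%N.
Proof.
move=> D0 hn.
have hq : (D <= n %/ D)%N by have := leq_div2r D hn; rewrite mulnK.
have hr : (n %% D < D)%N by rewrite ltn_mod.
have he := divn_eq n D.
set q := (n %/ D)%N in hq he *; set r := (n %% D)%N in hr he *.
split; nia.
Qed.

Section Lift.
Variable p : nat.
Local Notation F := 'F_p.
Local Notation A := (Fpt_root_inf p).

Definition dk (k : qnn) : nat := `|denq (sval k)|%N.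

Lemma dk_gt0 k : (0 < dk k)%N.
Proof. by rewrite /dk absz_gt0 denq_neq0. Qed.

Lemma monoU D (c : F) (k : qnn) : (0 < D)%N -> (dk k %| D)%N ->
  exists P : {poly F}, @emb p D P = << c *g k >>.
Proof.
move=> D0 hd.
set m := (D %/ dk k)%N.
have hD : D = (dk k * m)%N by rewrite mulnC divnK.
exists (c *: 'X^(`|numq (sval k)| * m)%N); rewrite embCXn; congr (<< _ *g _ >>).
apply: qnn_eqP => /=.
have m0 : m != 0%N by apply/eqP => m0; move: D0; rewrite hD m0 muln0.
rewrite hD !natrM invfM mulrACA divff ?mulr1 ?pnatr_eq0 //.
have hn : (`|numq (sval k)|%:R : rat) = (numq (sval k))%:~R.
  by rewrite natr_absz ger0_norm // numq_ge0; exact: (svalP k).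
have hdd : ((dk k)%:R : rat) = (denq (sval k))%:~R.
  by rewrite /dk natr_absz gtr0_norm // denq_gt0.
by rewrite hn hdd divq_num_den.
Qed.

Lemma lift_aux D (s : seq qnn) (c : qnn -> F) : (0 < D)%N ->
  (forall k, k \in s -> (dk k %| D)%N) ->
  exists P : {poly F}, @emb p D P = \sum_(k <- s) << c k *g k >>.
Proof.
move=> D0; elim: s => [|k s ih] hs.
  by exists 0; rewrite big_nil /emb rmorph0.
have [P hP] : exists P : {poly F}, emb D P = \sum_(k <- s) << c k *g k >>.
  by apply: ih => k' hk'; apply: hs; rewrite in_cons hk' orbT.
have [Q hQ] := monoU (c k) D0 (hs k (mem_head _ _)).
by exists (Q + P); rewrite big_cons -hP -hQ /emb rmorphD.
Qed.

Definition den (f : A) : nat := (\prod_(k <- msupp f) dk k)%N.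

Lemma den_gt0 f : (0 < den f)%N.
Proof. by rewrite /den prodn_gt0 // => k; exact: dk_gt0. Qed.

Lemma lift D (f : A) : (0 < D)%N -> (den f %| D)%N ->
  exists P : {poly F}, @emb p D P = f.
Proof.
move=> D0 hd; rewrite [f]monalgE; apply: lift_aux => // k hk.
apply: dvdn_trans hd; rewrite /den (big_rem _ hk) /=; exact: dvdn_mulr.
Qed.

Lemma lift_all (e : nat -> Fpt_root_inf_mod_t p) (b : nat) :
  exists D, (0 < D)%N /\ exists E : nat -> {poly F},
    forall i, (i < b)%N -> piR (@emb p D (E i)) = e i.
Proof.
pose D := (\prod_(i < b) den (repr (e i)))%N.
have D0 : (0 < D)%N by rewrite prodn_gt0 // => i; exact: den_gt0.
exists D; split => //.
suff H : forall b', (b' <= b)%N -> exists E : nat -> {poly F},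
    forall i, (i < b')%N -> piR (@emb p D (E i)) = e i.
  exact: H.
elim=> [|b' ih] hb.
  by exists (fun _ => 0) => i.
have [E hE] := ih (ltnW hb).
have [P hP] : exists P : {poly F}, @emb p D P = repr (e b').
  apply: lift => //; rewrite /D (bigD1 (Ordinal hb)) //=; exact: dvdn_mulr.
exists (fun i => if i == b' then P else E i) => i; rewrite ltnS leq_eqVlt.
case: eqP => [-> _|_ /= hi]; last exact: hE.
by rewrite hP /piR reprK.
Qed.
End Lift.

Theorem mainTheorem13 (p : nat) (hp : prime p) (phi : exsentence) :
  asymptotic_ex_theory (Fpt_mod_tn p) phi <->
  ex_theory (Fpt_root_inf_mod_t p) phi.
Proof.
have [e0 e1 eD eN eM] := piR_rmorph p.
have embm D : [/\ piR (@emb p D 0) = 0, piR (@emb p D 1) = 1,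
    {morph (fun x => piR (@emb p D x)) : x y / x + y},
    {morph (fun x => piR (@emb p D x)) : x / - x} &
    {morph (fun x => piR (@emb p D x)) : x y / x * y}].
  split; rewrite /emb ?rmorph0 ?rmorph1 //.
  - by move=> x y; rewrite rmorphD eD.
  - by move=> x; rewrite rmorphN eN.
  - by move=> x y; rewrite rmorphM eM.
split.
- move=> [N H].
  set n := maxn N 1.
  have n0 : (0 < n)%N by rewrite leq_max orbT.
  have [e' he'] := H n (leq_maxl N 1).
  pose E := fun i => ((e' i : {poly %/ ('X^n : {poly 'F_p})}) : {poly 'F_p}).
  have hE i : psi n 1 (E i) = e' i.
    apply: val_inj => /=; rewrite expr1 comp_polyXr.
    by apply: in_qpoly_small; exact: size_mk_monic.
  exists (fun i => piR (@emb p n (E i))).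
  have [f0 f1 fD fN fM] := embm n.
  have [g0 g1 gD gN gM] := psi_rmorph p n 1.
  rewrite (qf_transfer f0 f1 fD fN fM g0 g1 gD gN gM); last first.
    move=> x; rewrite embK // (psiK (D := n)) //; by rewrite mul1n ?prednK // ltn_predL.
  by rewrite (@qf_ext _ (fun i => psi n 1 (E i)) e' phi (fun i _ => hE i)).
- move=> [e he].
  have [D [D0 [E hE]]] := lift_all e (fbound phi).
  exists (D * D)%N => n hn.
  have n0 : (0 < n)%N by apply: leq_trans hn; rewrite muln_gt0 D0.
  have [h1 h2] := arith_ok D0 hn.
  set a := (n %/ D + 1)%N in h1 h2.
  have a0 : (0 < a)%N by rewrite /a addn1.
  exists (fun i => psi n a (E i)).
  have [f0 f1 fD fN fM] := embm D.
  have [g0 g1 gD gN gM] := psi_rmorph p n a.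
  rewrite -(qf_transfer f0 f1 fD fN fM g0 g1 gD gN gM); last first.
    by move=> x; rewrite embK // (psiK (D := D)).
  by rewrite (@qf_ext _ (fun i => piR (@emb p D (E i))) e phi hE).
Qed.
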